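(* Let ${\bm G}$ be a random matrix in $\mathbb{R}^{m\times n}$ with $\mathbb{E}[{\bm G}]={\bm M}$ and $\mathbb{E}[\|{\bm G}-{\bm M}\|_F^\alpha]\le\sigma^\alpha$ for some $\alpha\in(1,2]$, $\sigma>0$. Let $\tau>0$, $d=\min\{m,n\}$, and suppose $\|{\bm M}\|_F\le\tau/2$. Then $$\mathbb{E}\big[\|\mathcal{C}_\tau({\bm G})\|_F^2\big]\le 2\|{\bm M}\|_F^2+\big(2^\alpha d+3(2/3)^{\alpha-1}\big)\tau^{2-\alpha}\sigma^\alpha\le 2\|{\bm M}\|_F^2+8d\,\tau^{2-\alpha}\sigma^\alpha.$$
   Context: $\|\cdot\|_F$ is the Frobenius norm. Spectral clipping: for ${\bm G}\in\mathbb{R}^{m\times n}$ with (thin) SVD ${\bm G}={\bm U}\,\mathrm{diag}(\sigma_1,\dots,\sigma_d){\bm V}^\top$, $d=\min\{m,n\}$, and threshold $\tau>0$, define $\mathcal{C}_\tau({\bm G}):={\bm U}\,\mathrm{diag}(\min\{\sigma_1,\tau\},\dots,\min\{\sigma_d,\tau\}){\bm V}^\top$. *)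

(* Defs.v *)
From HB Require Import structures.
From mathcomp Require Import all_boot all_order all_algebra.
From mathcomp Require Import all_classical all_reals all_analysis.
Set Implicit Arguments. Unset Strict Implicit. Unset Printing Implicit Defensive.
Import Order.TTheory GRing.Theory Num.Theory.
Local Open Scope ring_scope.
Local Open Scope classical_set_scope.

Definition frob (R : realType) (m n : nat) (A : 'M[R]_(m, n)) : R :=
  Num.sqrt (\sum_(i < m) \sum_(j < n) A i j ^+ 2).

Definition is_thin_svd (R : realType) (m n : nat) (G : 'M[R]_(m, n))
  (U : 'M[R]_(m, minn m n)) (s : 'rV[R]_(minn m n)) (V : 'M[R]_(n, minn m n)) : Prop :=
  [/\ U^T *m U = 1%:M, V^T *m V = 1%:M, (forall k, 0 <= s 0 k)
    & G = U *m diag_mx s *m V^T].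

(* Spectral clipping C_tau(G) = U diag(min(sigma_i, tau)) V^T
   (the value does not depend on the chosen SVD; we pick one). *)
Definition spectral_clip (R : realType) (m n : nat) (tau : R) (G : 'M[R]_(m, n))
  : 'M[R]_(m, n) :=
  xget 0 [set C | exists U s V, is_thin_svd G U s V /\
      C = U *m diag_mx (\row_k Num.min (s 0 k) tau) *m V^T].

(* Main.v *)
Require Import Defs.
From HB Require Import structures.
From mathcomp Require Import all_boot all_order all_algebra.
From mathcomp Require Import all_classical all_reals all_analysis.
Import Order.TTheory GRing.Theory Num.Theory.
Local Open Scope ring_scope.
Local Open Scope classical_set_scope.
Set Implicit Arguments. Unset Strict Implicit.
Definition S2 (R : realType) (m n : nat) (A : 'M[R]_(m, n)) : R :=
  \sum_(i < m) \sum_(j < n) A i j ^+ 2.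

Lemma S2_ge0 (R : realType) m n (A : 'M[R]_(m, n)) : 0 <= S2 A.
Proof. by apply: sumr_ge0 => i _; apply: sumr_ge0 => j _; exact: sqr_ge0. Qed.

Lemma frob_sq (R : realType) m n (A : 'M[R]_(m, n)) : frob A ^+ 2 = S2 A.
Proof. by rewrite /frob sqr_sqrtr // S2_ge0. Qed.

Lemma S2_tr (R : realType) m n (A : 'M[R]_(m, n)) : S2 A = \tr (A *m A^T).
Proof.
rewrite /S2 /mxtrace; apply: eq_bigr => i _; rewrite mxE.
by apply: eq_bigr => j _; rewrite mxE expr2.
Qed.

Lemma svd_S2 (R : realType) m n k (U : 'M[R]_(m, k)) (s : 'rV[R]_k) (V : 'M[R]_(n, k)) :
  U^T *m U = 1%:M -> V^T *m V = 1%:M ->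
  S2 (U *m diag_mx s *m V^T) = \sum_(l < k) s 0 l ^+ 2.
Proof.
move=> hU hV; rewrite S2_tr !trmx_mul trmxK tr_diag_mx.
rewrite -!mulmxA (mulmxA V^T) hV mul1mx.
rewrite mxtrace_mulC -!mulmxA hU mulmx1.
rewrite /mxtrace; apply: eq_bigr => l _.
rewrite mul_diag_mx !mxE eqxx mulr1n expr2.
by [].
Qed.

Lemma clip_bound (R : realType) m n (tau : R) (G : 'M[R]_(m, n)) : 0 < tau ->
  S2 (spectral_clip tau G) <= S2 G /\ S2 (spectral_clip tau G) <= (minn m n)%:R * tau ^+ 2.
Proof.
move=> tau0; rewrite /spectral_clip.
set P := [set C | _].
have [ex|nex] := pselect (exists C, P C).
  have [U [s [V [[hU hV s0 ->] ->]]]] := xgetPex 0 ex.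
  rewrite !svd_S2 //; split.
    apply: ler_sum => l _; rewrite mxE.
    rewrite lerXn2r ?nnegrE ?le_min ?s0 ?(ltW tau0) ?ge_min ?lexx //.
  rewrite -[in X in _ <= X * _](card_ord (minn m n)) -sumr_const.
  rewrite mulr_suml; apply: ler_sum => l _; rewrite mxE mul1r.
  by rewrite lerXn2r ?nnegrE ?le_min ?s0 ?(ltW tau0) ?ge_min ?lexx ?orbT.
rewrite xgetPN; last by move=> C PC; apply: nex; exists C.
have -> : S2 (0 : 'M[R]_(m, n)) = 0.
  by rewrite /S2 big1 // => i _; rewrite big1 // => j _; rewrite mxE expr0n.
split; first exact: S2_ge0.
by rewrite mulr_ge0 ?sqr_ge0.
Qed.
From mathcomp Require Import ring lra.
Lemma lemA (R : realType) (r tau a : R) : 0 <= r -> r <= tau -> a <= 2 ->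
  r ^+ 2 <= tau `^ (2 - a) * r `^ a.
Proof.
move=> r0 rt a2.
have -> : r ^+ 2 = r `^ (2 - a) * r `^ a.
  rewrite -powRD; last by rewrite subrK pnatr_eq0.
  by rewrite subrK -[2]/(2%:R) powR_mulrn.
apply: ler_wpM2r; first exact: powR_ge0.
apply: ge0_ler_powR; rewrite ?subr_ge0 // nnegrE //; exact: le_trans rt.
Qed.

Lemma lemB (R : realType) (r tau a : R) : 0 < tau -> tau <= r -> 1 <= a ->
  tau * r <= tau `^ (2 - a) * r `^ a /\ tau ^+ 2 <= tau `^ (2 - a) * r `^ a.
Proof.
move=> t0 tr a1.
set u := r / tau.
have u1 : 1 <= u by rewrite /u ler_pdivlMr // mul1r.
have hr : r = tau * u by rewrite /u mulrCA divff ?mulr1 // gt_eqF.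
have -> : tau `^ (2 - a) * r `^ a = tau ^+ 2 * u `^ a.
  rewrite hr powRM ?(ltW t0) ?(le_trans ler01 u1) // mulrA -powRD; last first.
    by rewrite subrK pnatr_eq0.
  by rewrite subrK -[2]/(2%:R) powR_mulrn // ltW.
have ua : u <= u `^ a by apply: le1r_powR.
have t2 : 0 <= tau ^+ 2 by exact: sqr_ge0.
split.
  rewrite hr mulrA -expr2; exact: ler_wpM2l.
rewrite -[X in X <= _]mulr1; apply: ler_wpM2l => //; exact: le_trans ua.
Qed.

Lemma core (R : realType) (tau a d K mu2 q r sC : R) :
  0 < tau -> 1 < a -> a <= 2 -> 0 <= mu2 -> mu2 * 4 <= tau ^+ 2 ->
  d + 1 <= K -> 0 <= d -> 0 <= r ->
  (forall t, 0 <= t ^+ 2 * mu2 + 2 * t * q + r ^+ 2) ->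
  sC <= mu2 + 2 * q + r ^+ 2 -> sC <= d * tau ^+ 2 ->
  sC <= 2 * mu2 + 2 * q + K * (tau `^ (2 - a) * r `^ a).
Proof.
move=> t0 a1 a2 m0 m4 dK d0 r0 ht h1 h2.
set p := tau `^ (2 - a) * r `^ a.
have p0 : 0 <= p by rewrite mulr_ge0 // powR_ge0.
have [rt|tr] := leP r tau.
  have := lemA r0 rt a2; rewrite -/p => hp.
  nra.
have [hp1 hp2] := lemB t0 (ltW tr) (ltW a1); rewrite -/p in hp1 hp2.
have hq : - (r * tau) <= 2 * q.
  have := ht (2 * r / tau).
  set t := 2 * r / tau.
  have tt : t * tau = 2 * r by rewrite /t mulfVK // gt_eqF.
  have tp : 0 < t by rewrite /t divr_gt0 // mulr_gt0 // (lt_trans t0 tr).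
  move=> h.
  have h3 : t ^+ 2 * mu2 * 4 <= 4 * r ^+ 2.
    have -> : 4 * r ^+ 2 = t ^+ 2 * tau ^+ 2 by rewrite -exprMn tt; ring.
    rewrite -mulrA; apply: ler_wpM2l; [exact: sqr_ge0 | lra].
  have h4 : - (r ^+ 2) <= t * q by nra.
  have h5 : - (r ^+ 2) * tau <= t * tau * q by rewrite mulrAC; apply: ler_wpM2r => //; exact: ltW.
  rewrite tt in h5.
  nra.
nra.
Qed.

Definition cross (R : realType) m n (A B : 'M[R]_(m, n)) : R :=
  \sum_(i < m) \sum_(j < n) A i j * B i j.

Lemma S2_expand (R : realType) m n (t : R) (A B : 'M[R]_(m, n)) :
  S2 (t *: A + B) = t ^+ 2 * S2 A + 2 * t * cross A B + S2 B.
Proof.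
rewrite /S2 /cross !mulr_sumr -!big_split /=; apply: eq_bigr => i _.
rewrite !mulr_sumr -!big_split /=; apply: eq_bigr => j _.
rewrite !mxE; ring.
Qed.

Lemma pointwise (R : realType) m n (G M : 'M[R]_(m, n)) (tau a K : R) :
  0 < tau -> 1 < a -> a <= 2 -> frob M <= tau / 2 ->
  (minn m n)%:R + 1 <= K ->
  S2 (spectral_clip tau G) <=
  2 * frob M ^+ 2 + 2 * cross M (G - M) + K * (tau `^ (2 - a) * frob (G - M) `^ a).
Proof.
move=> t0 a1 a2 hM hK.
have [c1 c2] := clip_bound G t0.
have fM0 : 0 <= frob M by exact: sqrtr_ge0.
rewrite frob_sq; apply: (core (d := (minn m n)%:R)) => //.
- exact: S2_ge0.
- rewrite -frob_sq; nra.
- exact: sqrtr_ge0.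
- move=> t; rewrite frob_sq -S2_expand; exact: S2_ge0.
- apply: (le_trans c1); rewrite frob_sq.
  have := S2_expand 1 M (G - M); rewrite scale1r addrC subrK => ->.
  by rewrite expr1n mul1r mulr1 lexx.
Qed.

Lemma mono_int (R : realType) (dT : measure_display) (T : measurableType dT)
  (mu : {measure set T -> \bar R}) (f g : T -> \bar R) :
  (forall x, (0 <= f x)%E) -> (forall x, (f x <= g x)%E) ->
  (\int[mu]_x f x <= \int[mu]_x g x)%E.
Proof.
move=> f0 fg.
have g0 x : (0 <= g x)%E by apply: le_trans (fg x).
rewrite !ge0_integralTE //.
apply: ereal_sup_le => _ [h /= hf <-]; exists h => //= x.
exact: le_trans (hf x) (fg x).
Qed.

Theorem mainTheorem6 (R : realType) (dT : measure_display) (T : measurableType dT)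
  (P : probability T R) (m n : nat) (G : T -> 'M[R]_(m, n)) (M : 'M[R]_(m, n))
  (alpha sigma tau : R) :
  (0 < m)%N -> (0 < n)%N ->
  (forall i j, P.-integrable setT (fun x => ((G x) i j)%:E)) ->
  (forall i j, (\int[P]_x ((G x) i j)%:E = (M i j)%:E)%E) ->
  1 < alpha -> alpha <= 2 -> 0 < sigma ->
  (\int[P]_x ((frob (G x - M)) `^ alpha)%:E <= (sigma `^ alpha)%:E)%E ->
  0 < tau -> frob M <= tau / 2 ->
  let d := minn m n in
  (\int[P]_x ((frob (spectral_clip tau (G x))) ^+ 2)%:E
     <= (2 * frob M ^+ 2
         + (2 `^ alpha * d%:R + 3 * (2 / 3) `^ (alpha - 1))
           * tau `^ (2 - alpha) * sigma `^ alpha)%:E)%E /\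
  2 * frob M ^+ 2
    + (2 `^ alpha * d%:R + 3 * (2 / 3) `^ (alpha - 1)) * tau `^ (2 - alpha) * sigma `^ alpha
  <= 2 * frob M ^+ 2 + 8 * d%:R * tau `^ (2 - alpha) * sigma `^ alpha.
Proof.
move=> m0 n0 intG EG a1 a2 s0 Eg t0 hM d.
have d1 : 1 <= d%:R :> R by rewrite ler1n /d leq_min m0 n0.
set K := 2 `^ alpha * d%:R + 3 * (2 / 3) `^ (alpha - 1).
have h2a : 2 <= 2 `^ alpha :> R by apply: le1r_powR; [lra | exact: ltW].
have h23 : 0 <= (2 / 3) `^ (alpha - 1) :> R by exact: powR_ge0.
have K1 : d%:R + 1 <= K by rewrite /K; nra.
have pp : 0 <= tau `^ (2 - alpha) * sigma `^ alpha by rewrite mulr_ge0 ?powR_ge0.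
split; last first.
  have h4 : 2 `^ alpha <= 4 :> R.
    have -> : 4 = 2 `^ 2 :> R by rewrite -[2 in RHS]/(2%:R) powR_mulrn //; lra.
    by apply: ler_powR => //; lra.
  have h1 : (2 / 3) `^ (alpha - 1) <= 1 :> R.
    rewrite -[X in _ <= X](powRr0 (2 / 3 : R)).
    apply: ger_powR; [apply/andP; split; lra | lra].
  have hK : K <= 8 * d%:R by rewrite /K; nra.
  have := ler_wpM2r pp hK; rewrite !mulrA; lra.
pose Q x := cross M (G x - M).
pose g x := frob (G x - M) `^ alpha.
pose c := K * tau `^ (2 - alpha).
have mG i j : measurable_fun setT (fun x => G x i j).
  apply/measurable_realfun.measurable_EFinP; exact: measurable_int (intG i j).
have iQ : P.-integrable setT (fun x => (Q x)%:E).
  have -> : (fun x => (Q x)%:E) = (fun x => \sum_(i < m) \sum_(j < n)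
      ((M i j)%:E * ((G x i j)%:E - (cst (M i j)%:E) x)))%E.
    apply/funext => x; rewrite /Q /cross -sumEFin; apply: eq_bigr => i _.
    rewrite -sumEFin; apply: eq_bigr => j _; rewrite !mxE /=. by [].
  apply: integrable_sum; first exact: measurableT. move=> i _.
  apply: integrable_sum; first exact: measurableT. move=> j _.
  apply: integrableZl; first exact: measurableT.
  apply: integrableB; first exact: measurableT.
    exact: intG.
  exact: finite_measure_integrable_cst.
have EQ : (\int[P]_x (Q x)%:E = 0)%E.
  have -> : (fun x => (Q x)%:E) = (fun x => \sum_(i < m) \sum_(j < n)
      ((M i j)%:E * ((G x i j)%:E - (cst (M i j)%:E) x)))%E.
    apply/funext => x; rewrite /Q /cross -sumEFin; apply: eq_bigr => i _.
    rewrite -sumEFin; apply: eq_bigr => j _; rewrite !mxE /=. by [].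
  rewrite integral_sum //; last first.
    move=> i; apply: integrable_sum; first exact: measurableT. move=> j _.
    apply: integrableZl; first exact: measurableT.
    apply: integrableB; first exact: measurableT.
      exact: intG.
    exact: finite_measure_integrable_cst.
  rewrite big1 // => i _.
  rewrite integral_sum //; last first.
    move=> j.
    apply: integrableZl; first exact: measurableT.
    apply: integrableB; first exact: measurableT.
      exact: intG.
    exact: finite_measure_integrable_cst.
  rewrite big1 // => j _.
  rewrite integralZl //; last first.
    apply: integrableB; first exact: measurableT.
      exact: intG.
    exact: finite_measure_integrable_cst.
  rewrite integralB //; last exact: finite_measure_integrable_cst.
  rewrite EG integral_cst //.
  rewrite [X in (_ * (_ - _ * X))%E](_ : _ = 1%E); last exact: probability_setT.
  by rewrite mule1 subee // mule0.
have g0 x : 0 <= g x by exact: powR_ge0.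
have ig : P.-integrable setT (fun x => (g x)%:E).
  apply/integrableP; split.
    apply/measurable_realfun.measurable_EFinP.
    have -> : g = fun x => (S2 (G x - M) `^ 2^-1) `^ alpha.
      apply/funext => x; rewrite /g /frob powR12_sqrt //; exact: S2_ge0.
    change (measurable_fun setT ((fun y : R => y `^ alpha) \o (fun x => S2 (G x - M) `^ 2^-1))).
    apply: measurableT_comp; first exact: measurable_realfun.measurable_powR.
    change (measurable_fun setT ((fun y : R => y `^ 2^-1) \o (fun x => S2 (G x - M)))).
    apply: measurableT_comp; first exact: measurable_realfun.measurable_powR.
    have -> : (fun x => S2 (G x - M)) =
        (fun x => \sum_(i < m) \sum_(j < n) (G x i j - M i j) ^+ 2).
      apply/funext => x; rewrite /S2; apply: eq_bigr => i _.
      by apply: eq_bigr => j _; rewrite !mxE.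
    apply: measurable_sum => i; apply: measurable_sum => j.
    apply: measurable_realfun.measurable_funX.
    apply: measurable_realfun.measurable_funB => //.
  have -> : (\int[P]_x `|(g x)%:E| = \int[P]_x (g x)%:E)%E.
    by apply: eq_integral => x _; rewrite gee0_abs // lee_fin.
  exact: le_lt_trans Eg (ltry _).
have c0 : 0 <= c by rewrite /c mulr_ge0 ?powR_ge0 //; lra.
apply: le_trans; first apply: (@mono_int R dT T P
   (fun x => ((frob (spectral_clip tau (G x))) ^+ 2)%:E)
   (fun x => ((2 * frob M ^+ 2)%:E +
    ((2%:E * (Q x)%:E) + (c%:E * (g x)%:E))))%E).
- by move=> x; rewrite lee_fin sqr_ge0.
- move=> x; rewrite -!EFinM -!EFinD lee_fin frob_sq.
  have := pointwise (G x) t0 a1 a2 hM K1.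
  by rewrite /c /Q /g -mulrA addrA.
have iC : P.-integrable setT (fun _ : T => (2 * frob M ^+ 2)%:E).
  exact: finite_measure_integrable_cst.
have iQ2 : P.-integrable setT (fun x => (2%:E * (Q x)%:E)%E).
  by apply: integrableZl.
have ig2 : P.-integrable setT (fun x => (c%:E * (g x)%:E)%E).
  by apply: integrableZl.
rewrite integralD //; last exact: integrableD.
rewrite integralD // integralZl // EQ mule0 add0e integralZl //.
rewrite integral_cst //.
rewrite [X in (_ * X + _)%E](_ : _ = 1%E); last exact: probability_setT.
rewrite mule1 EFinD leeD2l //.
have -> : K * tau `^ (2 - alpha) * sigma `^ alpha = c * sigma `^ alpha by [].
rewrite EFinM -EFinM.
apply: le_trans; first exact: (lee_wpmul2l _ Eg).
  by rewrite lee_fin.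

Qed.
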